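(* Let $\mathbf a=(a_1,\ldots,a_n)\in\mathbb Z_{\geq1}^n$ and $\mathbf b=(b_1,\ldots,b_m)\in\mathbb Z_{\geq1}^m$. Every minimal solution $(\mathbf x,\mathbf y)$ of $x_1a_1+\cdots+x_na_n=y_1b_1+\cdots+y_mb_m$ is a convex combination of $\mathbf 0\in\mathbb R^{n+m}$ and the generators $\mathbf g_{i,j}$ ($1\leq i\leq n$, $1\leq j\leq m$). Moreover, one can use at most $m+n-1$ nonzero generators in any such combination (i.e., there is such a convex combination in which at most $m+n-1$ generators have nonzero coefficient).
   Context: A solution is a pair $(\mathbf x,\mathbf y)\in\mathbb Z_{\geq0}^n\times\mathbb Z_{\geq0}^m$ with $\sum_i x_ia_i=\sum_j y_jb_j$; it is minimal if it is nonzero and cannot be written as the sum of two nonzero solutions. Let $\mathbf e_k$ be the $k$th standard unit vector of $\mathbb R^{n+m}$. For $1\leq i\leq n$, $1\leq j\leq m$, the generator $\mathbf g_{i,j}=b_j\mathbf e_i+a_i\mathbf e_{n+j}$ is the solution whose only nonzero coordinates are $x_i=b_j$ and $y_j=a_i$. *)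

(* Defs.v *)
From mathcomp Require Import all_boot all_order all_algebra.
Set Implicit Arguments. Unset Strict Implicit. Unset Printing Implicit Defensive.
Import Order.TTheory GRing.Theory Num.Theory.

Definition is_solution (n m : nat) (a : 'I_n -> nat) (b : 'I_m -> nat)
  (x : 'I_n -> nat) (y : 'I_m -> nat) : Prop :=
  (\sum_(i < n) x i * a i)%N = (\sum_(j < m) y j * b j)%N.

Definition is_zero_sol (n m : nat) (x : 'I_n -> nat) (y : 'I_m -> nat) : Prop :=
  (forall i, x i = 0%N) /\ (forall j, y j = 0%N).

Definition minimal_solution (n m : nat) (a : 'I_n -> nat) (b : 'I_m -> nat)
  (x : 'I_n -> nat) (y : 'I_m -> nat) : Prop :=
  is_solution a b x y /\ ~ is_zero_sol x y /\
  ~ (exists (x1 x2 : 'I_n -> nat) (y1 y2 : 'I_m -> nat),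
        is_solution a b x1 y1 /\ is_solution a b x2 y2 /\
        ~ is_zero_sol x1 y1 /\ ~ is_zero_sol x2 y2 /\
        (forall i, x i = (x1 i + x2 i)%N) /\ (forall j, y j = (y1 j + y2 j)%N)).

(* Main.v *)
Require Import Defs.
From mathcomp Require Import all_boot all_order all_algebra.
From mathcomp Require Import zify ring lra.
Import Order.TTheory GRing.Theory Num.Theory.
Set Implicit Arguments. Unset Strict Implicit. Unset Printing Implicit Defensive.

Lemma sum_count (n : nat) (a : 'I_n -> nat) (s : seq 'I_n) :
  (\sum_(t < n) count_mem t s * a t)%N = sumn (map a s).
Proof.
elim: s => [|h s IH] /=; first by rewrite big1.
rewrite -IH.
under eq_bigr do rewrite mulnDl.
rewrite big_split /=; congr (_ + _)%N.
rewrite (bigD1 h) //= eqxx mul1n big1 ?addn0 // => t /negbTE.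
by rewrite eq_sym => ->.
Qed.

Lemma size_count (n : nat) (s : seq 'I_n) :
  (\sum_(t < n) count_mem t s)%N = size s.
Proof.
have := sum_count (fun _ => 1%N) s.
under eq_bigr do rewrite muln1.
move=> ->; by elim: s => //= h s ->.
Qed.

Definition tseq (n : nat) (x : 'I_n -> nat) : seq 'I_n :=
  flatten [seq nseq (x i) i | i <- enum 'I_n].

Lemma count_tseq n (x : 'I_n -> nat) t : count_mem t (tseq x) = x t.
Proof.
rewrite /tseq count_flatten -map_comp sumnE big_map big_enum /=.
under eq_bigr do rewrite count_nseq /=.
rewrite (bigD1 t) //= eqxx mul1n big1 ?addn0 // => i /negbTE.
by rewrite eq_sym => ->.
Qed.

Lemma sumn_pos n (a : 'I_n -> nat) (ha : forall i, (0 < a i)%N) (s : seq 'I_n) :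
  s != [::] -> (0 < sumn (map a s))%N.
Proof. case: s => //= h s _; have := ha h; lia. Qed.

Lemma take_split T (s : seq T) k k' : (k <= k')%N ->
  take k' s = take k s ++ drop k (take k' s).
Proof. by move=> le; rewrite -(take_takel s le) cat_take_drop. Qed.

Lemma sumP_le n (a : 'I_n -> nat) (s : seq 'I_n) k k' : (k <= k')%N ->
  sumn (map a (take k' s)) = (sumn (map a (take k s)) + sumn (map a (drop k (take k' s))))%N.
Proof. by move=> le; rewrite {1}(take_split s le) map_cat sumn_cat. Qed.

Lemma sumP_lt n (a : 'I_n -> nat) (ha : forall i, (0 < a i)%N) (s : seq 'I_n) k k' :
  (k < k')%N -> (k' <= size s)%N ->
  (sumn (map a (take k s)) < sumn (map a (take k' s)))%N.
Proof.
move=> lt le; rewrite (sumP_le a s (ltnW lt)).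
have : (0 < sumn (map a (drop k (take k' s))))%N.
  apply: sumn_pos => //; rewrite -size_eq0 size_drop size_takel //; lia.
lia.
Qed.

Lemma sum_take_full n (a : 'I_n -> nat) (s : seq 'I_n) k :
  sumn (map a s) = (sumn (map a (take k s)) + sumn (map a (drop k s)))%N.
Proof. by rewrite -sumn_cat -map_cat cat_take_drop. Qed.
Lemma no_sub n m (a : 'I_n -> nat) (b : 'I_m -> nat) x y (ta : seq 'I_n) (tb : seq 'I_m) :
  minimal_solution a b x y ->
  (forall t, count_mem t ta = x t) -> (forall t, count_mem t tb = y t) ->
  forall s1 s2, subseq s1 ta -> subseq s2 tb ->
  sumn (map a s1) = sumn (map b s2) -> (0 < sumn (map a s1))%N ->
  (sumn (map a s1) < sumn (map a ta))%N -> False.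
Proof.
move=> [hsol [_ hmin]] cx cy s1 s2 sub1 sub2 e pos lt.
apply: hmin.
exists (fun t => count_mem t s1), (fun t => x t - count_mem t s1)%N.
exists (fun t => count_mem t s2), (fun t => y t - count_mem t s2)%N.
have l1 t : (count_mem t s1 <= x t)%N by rewrite -cx; apply: leq_count_subseq.
have l2 t : (count_mem t s2 <= y t)%N by rewrite -cy; apply: leq_count_subseq.
have Sx : sumn (map a ta) = (\sum_i x i * a i)%N.
  by rewrite -sum_count; apply: eq_bigr => i _; rewrite cx.
have Sy : sumn (map b tb) = (\sum_i y i * b i)%N.
  by rewrite -sum_count; apply: eq_bigr => i _; rewrite cy.
have Dx : (\sum_i x i * a i = \sum_i count_mem i s1 * a i + \sum_i (x i - count_mem i s1) * a i)%N.
  by rewrite -big_split; apply: eq_bigr => i _ /=; rewrite -mulnDl subnKC.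
have Dy : (\sum_i y i * b i = \sum_i count_mem i s2 * b i + \sum_i (y i - count_mem i s2) * b i)%N.
  by rewrite -big_split; apply: eq_bigr => i _ /=; rewrite -mulnDl subnKC.
have E1 : (\sum_i count_mem i s1 * a i = sumn (map a s1))%N by rewrite sum_count.
have E2 : (\sum_i count_mem i s2 * b i = sumn (map b s2))%N by rewrite sum_count.
split; first by rewrite /is_solution E1 E2.
split.
  rewrite /is_solution; move: hsol; rewrite /is_solution Dx Dy E1 E2 e.
  by move/addnI.
split.
  move=> [z1 _]; move: pos; rewrite -E1 big1 // => i _; by rewrite z1.
split.
  move=> [z1 _].
  have : (\sum_i (x i - count_mem i s1) * a i = 0)%N by rewrite big1 // => i _; rewrite z1.
  move: lt; rewrite Sx Dx E1; lia.
by split => t; rewrite subnKC.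
Qed.

Lemma modS_cases S A B : (0 < S)%N -> (A < 2 * S)%N -> (B < 2 * S)%N -> A %% S = B %% S ->
  A = B \/ A = (B + S)%N \/ B = (A + S)%N.
Proof.
move=> Sp hA hB e.
have qa : (A %/ S < 2)%N by rewrite ltn_divLR.
have qb : (B %/ S < 2)%N by rewrite ltn_divLR.
move: (divn_eq A S) (divn_eq B S); rewrite e.
move: qa qb; case: (A %/ S) => [|[|]] //; case: (B %/ S) => [|[|]] //; lia.
Qed.

Lemma XY_le_S n m (a : 'I_n -> nat) (b : 'I_m -> nat) (ha : forall i, (0 < a i)%N)
  (hb : forall j, (0 < b j)%N) x y : minimal_solution a b x y ->
  ((\sum_i x i) * (\sum_j y j) <= \sum_i x i * a i)%N.
Proof.
move=> hm.
set ta := tseq x; set tb := tseq y.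
have cx := count_tseq x; have cy := count_tseq y.
have SX : (\sum_i x i = size ta)%N by rewrite -size_count; apply eq_bigr => i _; rewrite cx.
have SY : (\sum_i y i = size tb)%N by rewrite -size_count; apply eq_bigr => i _; rewrite cy.
set S := (\sum_i x i * a i)%N.
have Sa : S = sumn (map a ta) by rewrite -sum_count; apply eq_bigr => i _; rewrite cx.
have Sb : S = sumn (map b tb).
  by rewrite /S hm.1 -sum_count; apply eq_bigr => i _; rewrite cy.
rewrite SX SY.
case: (posnP S) => [S0|Spos].
  have -> : size ta = 0%N.
    apply/eqP; rewrite size_eq0; apply/negPn/negP => /(sumn_pos ha).
    by rewrite -Sa S0.
  by [].
pose P k := sumn (map a (take k ta)).
pose Q l := sumn (map b (take l tb)).
have PS k : (k < size ta)%N -> (P k < S)%N.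
  by move=> lt; rewrite Sa; have := sumP_lt ha lt (leqnn (size ta)); rewrite take_size.
have QS l : (l < size tb)%N -> (Q l < S)%N.
  by move=> lt; rewrite Sb; have := sumP_lt hb lt (leqnn (size tb)); rewrite take_size.
have Plt k k' : (k < k')%N -> (k' <= size ta)%N -> (P k < P k')%N.
  by move=> *; apply: sumP_lt.
have Qlt l l' : (l < l')%N -> (l' <= size tb)%N -> (Q l < Q l')%N.
  by move=> *; apply: sumP_lt.
have Ple k k' : (k <= k')%N -> (P k <= P k')%N.
  by move=> le; rewrite /P (sumP_le a ta le) leq_addr.
have Qle l l' : (l <= l')%N -> (Q l <= Q l')%N.
  by move=> le; rewrite /Q (sumP_le b tb le) leq_addr.
have Qinj l l' : (l < size tb)%N -> (l' < size tb)%N -> Q l = Q l' -> l = l'.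
  move=> h1 h2 e; case: (ltngtP l l') => // lt.
    by have := Qlt _ _ lt (ltnW h2); lia.
  by have := Qlt _ _ lt (ltnW h1); lia.
have key k l k' l' : (k <= k')%N -> (k' < size ta)%N -> (l < size tb)%N -> (l' < size tb)%N ->
   (P k + (S - Q l)) %% S = (P k' + (S - Q l')) %% S -> k = k' /\ l = l'.
  move=> le hk' hl hl' e.
  have hk : (k < size ta)%N by apply: leq_ltn_trans hk'.
  have := PS _ hk; have := PS _ hk'; have := QS _ hl; have := QS _ hl'; move=> q1 q2 p1 p2.
  have hA : (P k + (S - Q l) < 2 * S)%N by lia.
  have hB : (P k' + (S - Q l') < 2 * S)%N by lia.
  have := modS_cases Spos hA hB e.
  case: (ltngtP k k') le => // [lt|eq] _; last first.
    subst k'; case=> [|[]] E; [|lia|lia].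
    by split=> //; apply: Qinj => //; lia.
  have pl := Plt _ _ lt (ltnW hk').
  case=> [|[]] E.
  - exfalso.
    have ll : (l < l')%N.
      case: (ltnP l l') => // h; have := Qle _ _ h; lia.
    apply: (no_sub hm cx cy (s1 := drop k (take k' ta)) (s2 := drop l (take l' tb))).
    + exact: subseq_trans (drop_subseq _ _) (take_subseq _ _).
    + exact: subseq_trans (drop_subseq _ _) (take_subseq _ _).
    + have := sumP_le a ta (ltnW lt); have := sumP_le b tb (ltnW ll).
      rewrite -/(P k) -/(P k') -/(Q l) -/(Q l'); lia.
    + have := sumP_le a ta (ltnW lt); rewrite -/(P k) -/(P k'); lia.
    + have := sumP_le a ta (ltnW lt); rewrite -/(P k) -/(P k') -Sa; lia.
  - lia.
  - exfalso.
    have ll : (l' < l)%N.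
      case: (ltnP l' l) => // h; have := Qle _ _ h; lia.
    apply: (no_sub hm cx cy (s1 := drop k (take k' ta)) (s2 := take l' tb ++ drop l tb)).
    + exact: subseq_trans (drop_subseq _ _) (take_subseq _ _).
    + rewrite -[X in subseq _ X](cat_take_drop l' tb); apply: cat_subseq => //.
      rewrite -(subnK (ltnW ll)) -drop_drop; exact: drop_subseq.
    + have := sumP_le a ta (ltnW lt); have := sum_take_full b tb l.
      rewrite map_cat sumn_cat -/(P k) -/(P k') -/(Q l) -/(Q l') -Sb; lia.
    + have := sumP_le a ta (ltnW lt); rewrite -/(P k) -/(P k'); lia.
    + have := sumP_le a ta (ltnW lt); rewrite -/(P k) -/(P k') -Sa; lia.
pose f (p : 'I_(size ta) * 'I_(size tb)) : 'I_S :=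
  Ordinal (ltn_pmod (P p.1 + (S - Q p.2)) Spos).
have finj : injective f.
  move=> [k l] [k' l'] /(congr1 val) /= e.
  case: (leqP k k') => h.
    have [? ?] := key _ _ _ _ h (ltn_ord k') (ltn_ord l) (ltn_ord l') e.
    by congr (_, _); apply: val_inj.
  have [? ?] := key _ _ _ _ (ltnW h) (ltn_ord k) (ltn_ord l') (ltn_ord l) (esym e).
  by congr (_, _); apply: val_inj.
have := leq_card f finj.
by rewrite card_prod !card_ord.
Qed.

Local Open Scope ring_scope.

Lemma exists_ker (F : fieldType) k c (A : 'M[F]_(k, c)) : (c < k)%N ->
  exists2 u : 'rV[F]_k, u != 0 & u *m A = 0.
Proof.
move=> lt.
have nz : kermx A != 0.
  rewrite -mxrank_eq0 mxrank_ker; have := rank_leq_col A.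
  move: (\rank A) => r hr; apply/eqP; lia.
exists (nz_row (kermx A)); first by rewrite nz_row_eq0.
apply/sub_kermxP; apply: submx_trans (nz_row_sub _) _; exact: submx_refl.
Qed.

Lemma dep (R : realFieldType) n m (a : 'I_n -> nat) (b : 'I_m -> nat) (j0 : 'I_m)
  (Sp : {set 'I_n * 'I_m}) : (n + m.-1 < #|Sp|)%N ->
  exists mu : 'I_n -> 'I_m -> R,
    (exists i j, mu i j != 0) /\ (forall i j, (i, j) \notin Sp -> mu i j = 0) /\
    (forall i, \sum_j mu i j * (b j)%:R = 0) /\
    (forall j, j != j0 -> \sum_i mu i j * (a i)%:R = 0).
Proof.
move=> lt.
pose A : 'M[R]_(#|Sp|, n + m.-1) := \matrix_(r, c)
  match split c with
  | inl i => (((enum_val r).1 == i)%:R * (b (enum_val r).2)%:R)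
  | inr j' => (((enum_val r).2 == lift j0 j')%:R * (a (enum_val r).1)%:R)
  end.
have [u unz uA] := exists_ker A lt.
pose mu i j := \sum_r ((enum_val r == (i, j))%:R * u 0 r).
have colE c : (u *m A) 0 c = 0 by rewrite uA mxE.
exists mu; split.
  have [r ur] : exists r, u 0 r != 0.
    apply/existsP; move: unz; apply: contraR; rewrite negb_exists => /forallP h.
    apply/eqP/matrixP => i j; rewrite ord1 mxE; move: (h j); by rewrite negbK => /eqP.
  exists (enum_val r).1, (enum_val r).2; rewrite /mu -surjective_pairing.
  rewrite (bigD1 r) //= eqxx mul1r big1 ?addr0 // => r' ne.
  by rewrite (inj_eq enum_val_inj) (negbTE ne) mul0r.
split.
  move=> i j nin; apply: big1 => r _.
  case: eqP => [e|]; last by rewrite mul0r.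
  by move: nin; rewrite -e enum_valP.
split.
  move=> i; transitivity ((u *m A) 0 (unsplit (inl i))); last exact: colE.
  rewrite !mxE.
  rewrite /mu; under eq_bigr do rewrite mulr_suml.
  rewrite exchange_big /=; apply: eq_bigr => r _.
  rewrite mxE (unsplitK (inl i : 'I_n + 'I_m.-1)); case: (enum_val r) => p1 p2 /=.
  rewrite (bigD1 p2) //= big1 ?addr0 => [|j ne]; last first.
    by rewrite xpair_eqE [p2 == _]eq_sym (negbTE ne) andbF !mul0r.
  by rewrite xpair_eqE eqxx andbT mulrCA mulrA.
move=> j ne.
rewrite eq_sym in ne; have [j' ej _] := unlift_some ne.
transitivity ((u *m A) 0 (unsplit (inr j'))); last exact: colE.
rewrite !mxE.
rewrite /mu; under eq_bigr do rewrite mulr_suml.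
rewrite exchange_big /=; apply: eq_bigr => r _.
rewrite mxE (unsplitK (inr j' : 'I_n + 'I_m.-1)); case: (enum_val r) => p1 p2 /=.
rewrite (bigD1 p1) //= big1 ?addr0 => [|i ne']; last first.
  by rewrite xpair_eqE [p1 == _]eq_sym (negbTE ne') !mul0r.
by rewrite ej xpair_eqE eqxx /= mulrCA mulrA.
Qed.

Definition feas (R : realFieldType) n m (a : 'I_n -> nat) (b : 'I_m -> nat)
  (x : 'I_n -> nat) (y : 'I_m -> nat) (lam0 : R) (lam : 'I_n -> 'I_m -> R) :=
    0 <= lam0 /\ (forall i j, 0 <= lam i j) /\
    lam0 + \sum_(i < n) \sum_(j < m) lam i j = 1 /\
    (forall i : 'I_n, (x i)%:R = \sum_(j < m) lam i j * (b j)%:R) /\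
    (forall j : 'I_m, (y j)%:R = \sum_(i < n) lam i j * (a i)%:R).

Lemma reduce (R : realFieldType) n m (a : 'I_n -> nat) (b : 'I_m -> nat)
  (ha : forall i, (0 < a i)%N) (hb : forall j, (0 < b j)%N) x y (mpos : (0 < m)%N) :
  forall N (lam0 : R) lam, feas a b x y lam0 lam ->
  (#|[set p : 'I_n * 'I_m | lam p.1 p.2 != 0%R]| <= N)%N ->
  exists (lam0' : R) lam', feas a b x y lam0' lam' /\
  (#|[set p : 'I_n * 'I_m | lam' p.1 p.2 != 0%R]| <= m + n - 1)%N.
Proof.
elim=> [|N IH] lam0 lam hf hN.
  by exists lam0, lam; split => //; apply: leq_trans hN _.
case: (leqP #|[set p : 'I_n * 'I_m | lam p.1 p.2 != 0%R]| (m + n - 1)) => hle.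
  by exists lam0, lam.
set Sp := [set p : 'I_n * 'I_m | lam p.1 p.2 != 0] in hN hle.
pose j0 : 'I_m := Ordinal mpos.
have lt : (n + m.-1 < #|Sp|)%N by have := mpos; move: hle; lia.
have [mu [[i1 [j1 nz]] [out [Ei Fj]]]] := dep R a b j0 lt.
have bnz j : (b j)%:R != 0 :> R by rewrite pnatr_eq0 -lt0n.
have Fall j : \sum_i mu i j * (a i)%:R = 0.
  case: (eqVneq j j0) => [->|]; last exact: Fj.
  have : \sum_i (\sum_j mu i j * (b j)%:R) * (a i)%:R = 0.
    by rewrite big1 // => i _; rewrite Ei mul0r.
  under eq_bigr do rewrite mulr_suml.
  rewrite exchange_big (bigD1 j0) //= [X in _ + X]big1 ?addr0 => [|k ne]; last first.
    transitivity ((b k)%:R * \sum_i mu i k * (a i)%:R); last by rewrite Fj // mulr0.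
    by rewrite mulr_sumr; apply: eq_bigr => i _; rewrite mulrCA mulrA.
  have -> : \sum_i mu i j0 * (b j0)%:R * (a i)%:R = (b j0)%:R * \sum_i mu i j0 * (a i)%:R.
    by rewrite mulr_sumr; apply: eq_bigr => i _; rewrite mulrCA mulrA.
  by move/eqP; rewrite mulf_eq0 (negbTE (bnz j0)) /= => /eqP.
have [nu [[i2 [j2 nz2]] [out2 [Ei2 [Fj2 sig]]]]] : exists nu : 'I_n -> 'I_m -> R,
    (exists i j, nu i j != 0) /\ (forall i j, (i, j) \notin Sp -> nu i j = 0) /\
    (forall i, \sum_j nu i j * (b j)%:R = 0) /\
    (forall j, \sum_i nu i j * (a i)%:R = 0) /\ 0 <= \sum_i \sum_j nu i j.
  case: (lerP 0 (\sum_i \sum_j mu i j)) => hs.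
    by exists mu; split; [exists i1, j1|].
  exists (fun i j => - mu i j); split; first by exists i1, j1; rewrite oppr_eq0.
  split; first by move=> i j h; rewrite out // oppr0.
  split; first by move=> i; under eq_bigr do rewrite mulNr; rewrite sumrN Ei oppr0.
  split; first by move=> j; under eq_bigr do rewrite mulNr; rewrite sumrN Fall oppr0.
  under eq_bigr do rewrite sumrN; rewrite sumrN oppr_ge0; exact: ltW.
have [p0 Pp0] : exists p : 'I_n * 'I_m, 0 < nu p.1 p.2.
  apply/existsP; apply/contraT; rewrite negb_exists => /forallP hneg.
  have hle0 p : 0 <= - nu p.1 p.2 by rewrite oppr_ge0 leNgt hneg.
  have s0 : \sum_p - nu p.1 p.2 = 0.
    apply/eqP; rewrite eq_le [0 <= _]sumr_ge0 ?andbT; last by move=> p _.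
    by rewrite sumrN oppr_le0 -(pair_bigA _ (fun i j => nu i j)).
  have := psumr_eq0P (fun p _ => hle0 p) s0 (i := (i2, j2)) isT.
  by move/eqP; rewrite oppr_eq0 (negbTE nz2).
case: (@Order.TotalTheory.arg_minP _ R _ p0 [pred p | 0 < nu p.1 p.2]
   (fun p => lam p.1 p.2 / nu p.1 p.2) Pp0) => ps Pps minps.
rewrite inE /= in Pps.
move: hf => [h0 [hl [htot [hx hy]]]].
set t := lam ps.1 ps.2 / nu ps.1 ps.2.
have t0 : 0 <= t by rewrite divr_ge0 // ltW.
pose lam' i j := lam i j - t * nu i j.
apply: (IH (lam0 + t * \sum_i \sum_j nu i j) lam').
  split; first by rewrite addr_ge0 // mulr_ge0.
  split.
    move=> i j; rewrite /lam' subr_ge0.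
    case: (ltrP 0 (nu i j)) => hn.
      have := minps (i, j) hn; rewrite /= ler_pdivlMr //; exact.
    by apply: le_trans (hl i j); rewrite mulr_ge0_le0.
  split.
    have -> : \sum_i \sum_j lam' i j = \sum_i \sum_j lam i j - t * \sum_i \sum_j nu i j.
      rewrite mulr_sumr -sumrB; apply: eq_bigr => i _; rewrite mulr_sumr -sumrB.
      by apply: eq_bigr.
    move: htot; lra.
  split.
    move=> i; rewrite hx.
    have -> : \sum_j lam' i j * (b j)%:R = \sum_j lam i j * (b j)%:R - t * \sum_j nu i j * (b j)%:R.
      by rewrite mulr_sumr -sumrB; apply: eq_bigr => j _; rewrite /lam'; ring.
    by rewrite Ei2 mulr0 subr0.
  move=> j; rewrite hy.
  have -> : \sum_i lam' i j * (a i)%:R = \sum_i lam i j * (a i)%:R - t * \sum_i nu i j * (a i)%:R.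
    by rewrite mulr_sumr -sumrB; apply: eq_bigr => i _; rewrite /lam'; ring.
  by rewrite Fj2 mulr0 subr0.
have psin : ps \in Sp.
  apply/contraT => hn; have := out2 ps.1 ps.2; rewrite -surjective_pairing => /(_ hn) e.
  by move: Pps; rewrite e ltxx.
have sub : [set p : 'I_n * 'I_m | lam' p.1 p.2 != 0] \subset Sp :\ ps.
  apply/subsetP => q; rewrite !inE /lam' => hq.
  apply/andP; split.
    apply/eqP => e; move: hq; rewrite e /t divfK ?subrr ?eqxx //.
    by rewrite gt_eqF.
  apply/negP => /eqP hz; move: hq.
  have -> : nu q.1 q.2 = 0.
    apply: out2; rewrite -surjective_pairing /Sp inE /= hz eqxx //.
  by rewrite hz mulr0 subrr eqxx.
have := subset_leq_card sub.
move: hN; rewrite (cardsD1 ps Sp) psin /= add1n ltnS => h1 h2.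
exact: leq_trans h2 h1.
Qed.

Unset Implicit Arguments.

Theorem corollary2 (R : realFieldType) (n m : nat)
    (a : 'I_n -> nat) (b : 'I_m -> nat)
    (ha : forall i, (0 < a i)%N) (hb : forall j, (0 < b j)%N)
    (x : 'I_n -> nat) (y : 'I_m -> nat) :
  minimal_solution a b x y ->
  exists (lam0 : R) (lam : 'I_n -> 'I_m -> R),
    0 <= lam0 /\ (forall i j, 0 <= lam i j) /\
    lam0 + \sum_(i < n) \sum_(j < m) lam i j = 1 /\
    (forall i : 'I_n, (x i)%:R = \sum_(j < m) lam i j * (b j)%:R) /\
    (forall j : 'I_m, (y j)%:R = \sum_(i < n) lam i j * (a i)%:R) /\
    (#|[set p : 'I_n * 'I_m | lam p.1 p.2 != 0%R]| <= m + n - 1)%N.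
Proof.
move=> hm.
have hsol : (\sum_i x i * a i = \sum_j y j * b j)%N := hm.1.
have XY := XY_le_S ha hb hm.
set S := (\sum_i x i * a i)%N in hsol XY.
have Spos : (0 < S)%N.
  case: hm => _ [nz _].
  rewrite lt0n; apply/negP => /eqP S0; apply: nz; split.
    move=> i; have : (x i * a i <= S)%N by rewrite /S (bigD1 i) //= leq_addr.
    rewrite S0 leqn0 muln_eq0 => /orP[/eqP //|]; by rewrite eqn0Ngt ha.
  move=> j; have : (y j * b j <= S)%N by rewrite hsol (bigD1 j) //= leq_addr.
  rewrite S0 leqn0 muln_eq0 => /orP[/eqP //|]; by rewrite eqn0Ngt hb.
have mpos : (0 < m)%N.
  case: (posnP m) => // m0; move: Spos; rewrite hsol big1 // => j _.
  by have := ltn_ord j; lia.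
have Sne : (S%:R : R) != 0 by rewrite pnatr_eq0 -lt0n.
have S0 : (0 : R) < S%:R by rewrite ltr0n.
pose lam i j := ((x i * y j)%:R / S%:R : R).
have hf0 : feas a b x y (1 - ((\sum_i x i) * (\sum_j y j))%:R / S%:R) lam.
  split.
    by rewrite subr_ge0 ler_pdivrMr // mul1r ler_nat.
  split; first by move=> i j; rewrite divr_ge0 ?ler0n.
  split.
    have -> : \sum_i \sum_j lam i j = ((\sum_i x i) * (\sum_j y j))%:R / S%:R.
      transitivity (\sum_i (x i)%:R * ((\sum_j (y j)%:R) / S%:R) : R).
        apply: eq_bigr => i _; rewrite mulr_suml mulr_sumr; apply: eq_bigr => j _.
        by rewrite /lam natrM mulrA.
      by rewrite -mulr_suml natrM !natr_sum mulrA.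
    by rewrite subrK.
  split.
    move=> i; symmetry.
    transitivity ((x i)%:R * (\sum_j (y j * b j)%:R) / S%:R : R).
      rewrite mulr_sumr mulr_suml; apply: eq_bigr => j _; rewrite /lam !natrM.
      by rewrite mulrAC !mulrA.
    by rewrite -natr_sum -hsol mulfK.
  move=> j; symmetry.
  transitivity ((y j)%:R * (\sum_i (x i * a i)%:R) / S%:R : R).
    rewrite mulr_sumr mulr_suml; apply: eq_bigr => i _; rewrite /lam !natrM.
    by rewrite [(x i)%:R * _]mulrC mulrAC !mulrA.
  by rewrite -natr_sum mulfK.
have [l0 [l [hf hc]]] := reduce ha hb mpos hf0 (leqnn _).
by exists l0, l; case: hf => [? [? [? [? ?]]]].
Qed.
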